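(* Let $G=(V,E)$ be a finite, simple, connected reflective graph. Let $x,x'\in V$ with $d(x,x')=n-1$ for some integer $n\geq 1$, and assume the subgraph induced on $S_1(x)$ is connected. Then $S_1(x)\cap S_n(x')$ is isometric.
   Context: $d$ is the combinatorial distance, $S_n(x)=\{v:d(v,x)=n\}$. For adjacent $x\sim y$ let $V_x^y=\{v: d(v,x)<d(v,y)\}$, $V^{xy}=\{v:d(v,x)=d(v,y)\}$. A reflection from $x$ to $y$ is a graph automorphism $\phi$ with $\phi\circ\phi=\mathrm{id}$, $\phi(x)=y$, such that the edges between $V_x^y$ and $V_y^x$ are exactly $\{\{x',\phi(x')\}:x'\in V_x^y\}$ and $\phi$ fixes $V^{xy}$ pointwise. A graph is reflective if every edge admits a reflection. A set $W\subseteq V$ is isometric if for all $w,w'\in W$ there is a shortest path in $G$ from $w$ to $w'$ all of whose vertices lie in $W$. *)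

(* Defs.v *)
From mathcomp Require Import all_boot.
Set Implicit Arguments. Unset Strict Implicit. Unset Printing Implicit Defensive.

Definition simple_graph (T : finType) (e : rel T) : Prop :=
  symmetric e /\ irreflexive e.

Definition walkb (T : finType) (e : rel T) (n : nat) (x y : T) : bool :=
  [exists t : n.-tuple T, path e x t && (last x t == y)].

(* combinatorial distance: least n with a walk of length n
   (for connected graphs this is < #|T|; otherwise #|T| by convention) *)
Definition dist (T : finType) (e : rel T) (x y : T) : nat :=
  find (fun n => walkb e n x y) (iota 0 #|T|).

Definition graph_connected (T : finType) (e : rel T) : Prop :=
  forall x y : T, connect e x y.

Definition sphere (T : finType) (e : rel T) (n : nat) (x : T) : {set T} :=
  [set v | dist e v x == n].

Definition Vside (T : finType) (e : rel T) (x y : T) : {set T} :=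
  [set v | dist e v x < dist e v y].
Definition Vmid (T : finType) (e : rel T) (x y : T) : {set T} :=
  [set v | dist e v x == dist e v y].

Definition automorphism (T : finType) (e : rel T) (phi : T -> T) : Prop :=
  bijective phi /\ forall u v, e (phi u) (phi v) = e u v.

Definition reflection (T : finType) (e : rel T) (x y : T) (phi : T -> T) : Prop :=
  [/\ automorphism e phi /\ (forall v, phi (phi v) = v),
      phi x = y,
      (forall u, u \in Vside e x y -> phi u \in Vside e y x /\ e u (phi u)),
      (forall u v, u \in Vside e x y -> v \in Vside e y x ->
         (e u v <-> v = phi u))
    & forall v, v \in Vmid e x y -> phi v = v].

Definition reflective (T : finType) (e : rel T) : Prop :=
  forall x y, e x y -> exists phi, reflection e x y phi.

Definition isometric (T : finType) (e : rel T) (W : {set T}) : Prop :=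
  forall w w', w \in W -> w' \in W ->
    exists t : (dist e w w').-tuple T,
      [/\ path e w t, last w t = w' & all (fun v => v \in W) t].

Definition induced_connected (T : finType) (e : rel T) (W : {set T}) : Prop :=
  forall u v, u \in W -> v \in W ->
    exists p : seq T, [/\ path e u p, last u p = v & all (fun z => z \in W) p].

(* Main.v *)
Require Import Defs.
From mathcomp Require Import all_boot.
Set Implicit Arguments. Unset Strict Implicit. Unset Printing Implicit Defensive.

Lemma walkb_seq (T : finType) (e : rel T) p (s : seq T) :
  path e p s -> walkb e (size s) p (last p s).
Proof. move=> hp; apply/existsP; exists (in_tuple s); by rewrite /= hp eqxx. Qed.

Lemma seq_walkb (T : finType) (e : rel T) n p q :
  walkb e n p q -> exists s : seq T, [/\ size s = n, path e p s & last p s = q].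
Proof. case/existsP=> t /andP[hp /eqP hl]; exists (val t); by rewrite size_tuple. Qed.

Lemma has_walk (T : finType) (e : rel T) p q : connect e p q ->
  has (fun n => walkb e n p q) (iota 0 #|T|).
Proof.
case/connectP=> s hp ->.
case/shortenP: hp => s' hp' hu _.
apply/hasP; exists (size s'); last exact: walkb_seq.
rewrite mem_iota /= add0n.
move/card_uniqP: hu => /= hc.
have := max_card (mem (p :: s')). by rewrite hc.
Qed.

Lemma dist_lt (T : finType) (e : rel T) p q : graph_connected e ->
  dist e p q < #|T|.
Proof.
move=> hc; have h := has_walk (hc p q).
by rewrite has_find size_iota in h.
Qed.

Lemma dist_walk (T : finType) (e : rel T) p q : graph_connected e ->
  exists s, [/\ size s = dist e p q, path e p s & last p s = q].
Proof.
move=> hc; have h := has_walk (hc p q).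
have hlt := dist_lt p q hc.
have := nth_find 0 h => /=.
rewrite nth_iota // add0n => /seq_walkb.
exact.
Qed.

Lemma dist_le (T : finType) (e : rel T) p s : graph_connected e ->
  path e p s -> dist e p (last p s) <= size s.
Proof.
move=> hc hp. case: (ltnP (size s) #|T|) => hs.
- rewrite leqNgt; apply/negP => hlt.
  have := @before_find _ 0 (fun n => walkb e n p (last p s)) (iota 0 #|T|) (size s) hlt.
  by rewrite /= nth_iota // add0n walkb_seq.
- exact: leq_trans (ltnW (dist_lt p (last p s) hc)) hs.
Qed.

Lemma dist_tri (T : finType) (e : rel T) a b c : graph_connected e ->
  dist e a c <= dist e a b + dist e b c.
Proof.
move=> hc.
have [s1 [h1 p1 l1]] := dist_walk a b hc.
have [s2 [h2 p2 l2]] := dist_walk b c hc.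
have := @dist_le _ e a (s1 ++ s2) hc.
rewrite cat_path p1 l1 p2 last_cat l1 l2 size_cat h1 h2; exact.
Qed.

Lemma dist_adj (T : finType) (e : rel T) a b : graph_connected e ->
  e a b -> dist e a b <= 1.
Proof. move=> hc hab; have := @dist_le _ e a [:: b] hc; rewrite /= hab; exact. Qed.

Lemma dist_refl (T : finType) (e : rel T) a : graph_connected e -> dist e a a = 0.
Proof. move=> hc; have := @dist_le _ e a [::] hc; rewrite /= leqn0; by move/(_ is_true_true)/eqP. Qed.

Lemma dist0E (T : finType) (e : rel T) a b : graph_connected e ->
  dist e a b = 0 -> a = b.
Proof.
move=> hc h0; have [s [h1 p1 l1]] := dist_walk a b hc.
by case: s h1 p1 l1 => [|y s]; rewrite h0.
Qed.

Lemma dist1E (T : finType) (e : rel T) a b : graph_connected e -> irreflexive e ->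
  (dist e a b = 1) <-> e a b.
Proof.
move=> hc hirr; split.
- move=> h1; have [s [hs p1 l1]] := dist_walk a b hc.
  case: s hs p1 l1 => [|y [|z s]]; rewrite h1 //= => _.
  by rewrite andbT => ? <-.
- move=> hab; have := dist_adj hc hab.
  case H: (dist e a b) => [|[|k]] // _.
  move/(dist0E hc): H => H; by rewrite H hirr in hab.
Qed.

Lemma dist2 (T : finType) (e : rel T) a b y : graph_connected e -> irreflexive e ->
  a <> b -> ~~ e a b -> e a y -> e y b -> dist e a b = 2.
Proof.
move=> hc hirr hne hnab hay hyb.
have := @dist_le _ e a [:: y; b] hc; rewrite /= hay hyb => /(_ isT) hle.
case H: (dist e a b) hle => [|[|[|k]]] // _.
- by move/(dist0E hc): H.
- by move/(dist1E a b hc hirr): H; rewrite (negbTE hnab).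
Qed.

Lemma dist_sym (T : finType) (e : rel T) a b : graph_connected e -> symmetric e ->
  dist e a b = dist e b a.
Proof.
move=> hc hsym.
suff H : forall a b, dist e b a <= dist e a b.
  by apply/eqP; rewrite eqn_leq !H.
move=> {}a {}b.
have [s [<- p1 <-]] := dist_walk a b hc.
elim: s a p1 => [|y s IH] a /=.
- by rewrite dist_refl.
- case/andP=> hay hp.
  apply: leq_trans (dist_tri _ y _ hc) _.
  idtac.
  rewrite -addn1; apply: leq_add; first exact: IH.
  by apply: dist_adj; rewrite // hsym.
Qed.

Lemma dist_map (T : finType) (e : rel T) (g : T -> T) p q : graph_connected e ->
  (forall u v, e u v -> g u = g v \/ e (g u) (g v)) ->
  dist e (g p) (g q) <= dist e p q.
Proof.
move=> hc hg.
have [s [<- p1 <-]] := dist_walk p q hc.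
elim: s p p1 => [|y s IH] p /=.
- by rewrite dist_refl.
- case/andP=> hpy hp.
  apply: leq_trans (dist_tri _ (g y) _ hc) _.
  rewrite addnC -addn1; apply: leq_add; first exact: IH.
  case: (hg _ _ hpy) => [->|h]; first by rewrite dist_refl.
  exact: dist_adj.
Qed.

Lemma fold_key (T : finType) (e : rel T) a b phi : symmetric e -> reflection e a b phi ->
  forall u v, u \in Vside e b a -> v \notin Vside e b a -> e u v ->
  phi u = v \/ e (phi u) v.
Proof.
move=> hsym [[[_ hauto] hinv] hpa hside hP4 hmid] u v hu hv huv.
case hv2 : (v \in Vside e a b).
- left. have := (hP4 v u hv2 hu).1; rewrite hsym huv => /(_ isT) ->; by rewrite hinv.
- right. have hvm : v \in Vmid e a b.
    move: hv hv2; rewrite !inE -!leqNgt => hv /negbT.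
    by rewrite -leqNgt eqn_leq hv => ->.
  by rewrite -[X in e _ X](hmid v hvm) hauto.
Qed.

Lemma fold_ok (T : finType) (e : rel T) a b phi : symmetric e -> reflection e a b phi ->
  forall u v, e u v ->
  (if u \in Vside e b a then phi u else u) = (if v \in Vside e b a then phi v else v)
  \/ e (if u \in Vside e b a then phi u else u) (if v \in Vside e b a then phi v else v).
Proof.
move=> hsym hr u v huv.
have hr' := hr; case: hr' => [[[_ hauto] hinv] _ _ _ _].
case hu: (u \in Vside e b a); case hv: (v \in Vside e b a).
- by right; rewrite hauto.
- by apply: (fold_key hsym hr) => //; rewrite hv.
- have [h|h] := fold_key hsym hr hv (negbT hu) (ltac:(by rewrite hsym)).
    by left.
  by right; rewrite hsym.
- by right.
Qed.

Lemma keyL (T : finType) (e : rel T) x a b c d :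
  simple_graph e -> graph_connected e -> reflective e ->
  e a x -> e b x -> e c x -> e d x ->
  e a b -> e b c -> e c d -> a <> c -> ~~ e a c -> d <> a -> ~~ e d a -> d <> b -> ~~ e d b ->
  exists z, [/\ e z x, e a z & e z d].
Proof.
move=> [hsym hirr] hc hrefl hax hbx hcx hdx hab hbc hcd hac hnac hda hnda hdb hndb.
have hba : e b a by rewrite hsym.
have [phi [[[_ hauto] hinv] hpb hside _ hmid]] := hrefl b a hba.
have hcb : dist e c b = 1 by apply/dist1E => //; rewrite hsym.
have hca : dist e c a = 2.
  apply: (@dist2 _ _ _ _ b) => //; [by move/esym | by rewrite hsym | by rewrite hsym].
have hdb2 : dist e d b = 2.
  apply: (@dist2 _ _ _ _ c) => //; by rewrite hsym.
have hda2 : dist e d a = 2.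
  apply: (@dist2 _ _ _ _ x) => //; by rewrite hsym.
have hxb : dist e x b = 1 by apply/dist1E => //; rewrite hsym.
have hxa : dist e x a = 1 by apply/dist1E => //; rewrite hsym.
have hcin : c \in Vside e b a by rewrite inE hcb hca.
have hdm : d \in Vmid e b a by rewrite inE hdb2 hda2.
have hxm : x \in Vmid e b a by rewrite inE hxb hxa.
exists (phi c); split.
- by rewrite -[X in e _ X](hmid x hxm) hauto.
- by rewrite -hpb hauto.
- by rewrite -[X in e _ X](hmid d hdm) hauto.
Qed.

Lemma claim1 (T : finType) (e : rel T) x w :
  simple_graph e -> graph_connected e -> reflective e -> e w x ->
  forall s, path e w s -> all (fun v => e v x) s ->
  last w s = w \/ e w (last w s) \/ exists z, [/\ e z x, e w z & e z (last w s)].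
Proof.
move=> hs hc hrefl hwx s; have [hsym hirr] := hs.
elim/last_ind: s => [|q c IH]; first by left.
rewrite rcons_path all_rcons last_rcons => /andP[hq hvc] /andP[hcx hall].
set v := last w q in hvc IH.
have hvx : e v x.
  rewrite /v.
  have := mem_last w q; rewrite inE => /orP[/eqP->|hin] //.
  exact: (allP hall).
case: (c =P w) => [->|hcw]; first by left.
case hwc : (e w c); first by right; left.
right; right.
have [hv|[hwv|[z [hzx hwz hzv]]]] := IH hq hall.
- by rewrite hv hwc in hvc.
- by exists v.
- case: (v =P w) => [hv|hvw]; first by rewrite hv hwc in hvc.
  case hwv : (e w v); first by exists v.
  case hzc : (e z c); first by exists z.
  case: (c =P z) => [hcz|hcz]; first by rewrite -hcz hwc in hwz.
  apply: (@keyL _ _ x w z v c) => //.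
  + by move/esym.
  + by rewrite hwv.
  + by rewrite hsym hwc.
  + by rewrite hsym hzc.
Qed.

Theorem lemma2p11 (T : finType) (e : rel T) (x x' : T) (n : nat) :
  simple_graph e -> graph_connected e -> reflective e ->
  1 <= n -> dist e x x' = n.-1 ->
  induced_connected e (sphere e 1 x) ->
  isometric e (sphere e 1 x :&: sphere e n x').
Proof.
move=> hs hc hrefl hn hxx' hic w w' hw hw'.
have [hsym hirr] := hs.
suff [s [hsz hp hl hall]] : exists s : seq T, [/\ size s = dist e w w', path e w s,
    last w s = w' & all (fun v => v \in sphere e 1 x :&: sphere e n x') s].
  by exists (Tuple (introT eqP hsz)).
have S1 : forall v, (v \in sphere e 1 x) = e v x.
  move=> v; rewrite inE; apply/eqP/idP => [/dist1E|]; first by apply.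
  by move/(dist1E v x hc hirr).
have hw0 := hw; have hw'0 := hw'.
rewrite !inE in hw hw'.
case/andP: hw => /eqP/dist1E hwx /eqP hwn.
case/andP: hw' => /eqP/dist1E hw'x /eqP hw'n.
have {}hwx := hwx hc hirr; have {}hw'x := hw'x hc hirr.
case: (w' =P w) => [->|hne].
  by exists [::]; rewrite dist_refl.
case hww : (e w w').
  exists [:: w']; rewrite /= hww hw'0; split => //.
  by apply/esym/dist1E.
have hd2 : dist e w w' = 2.
  by apply: (@dist2 _ _ _ _ x) => //; [move/esym | rewrite hww | rewrite hsym].
suff [z [hz hwz hzw']] : exists z, [/\ z \in sphere e 1 x :&: sphere e n x', e w z & e z w'].
  by exists [:: z; w']; rewrite /= hwz hzw' hz hw'0 hd2.
have [p [hp hl hall]] := hic w w' (ltac:(by rewrite S1)) (ltac:(by rewrite S1)).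
have hall' : all (fun v => e v x) p.
  by apply: sub_all hall => v /=; rewrite S1.
have [h|[h|[z0 [hz0x hwz0 hz0w']]]] := claim1 hs hc hrefl hwx hp hall'.
- by rewrite hl in h.
- by rewrite hl hww in h.
rewrite hl in hz0w'.
have hdx : forall v, e v x -> dist e v x' <= n.
  move=> v hvx; apply: leq_trans (dist_tri v x x' hc) _.
  rewrite hxx' (dist1E v x hc hirr).2 //.
  by case: (n) hn.
case hz0n : (dist e z0 x' == n).
  exists z0; split => //; rewrite !inE hz0n andbT; by apply/eqP/dist1E.
have hz0lt : dist e z0 x' < n by rewrite ltn_neqAle hz0n hdx.
have hz0w : e z0 w by rewrite hsym.
have [rho hr] := hrefl z0 w hz0w.
have hr' := hr; case: hr' => [[[_ hauto] hinv] hpz hside _ hmid].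
have hx'side : x' \in Vside e z0 w.
  by rewrite inE (dist_sym x' z0 hc hsym) (dist_sym x' w hc hsym) hwn.
have hw'side : w' \in Vside e z0 w.
  rewrite inE (_ : dist e w' z0 = 1); last by apply/dist1E => //; rewrite hsym.
  rewrite (_ : dist e w' w = 2) //.
  apply: (@dist2 _ _ _ _ x) => //; first by rewrite hsym hww.
  by rewrite hsym.
have hxm : x \in Vmid e z0 w.
  rewrite inE (_ : dist e x z0 = 1); last by apply/dist1E => //; rewrite hsym.
  rewrite (_ : dist e x w = 1) //; by apply/dist1E => //; rewrite hsym.
have [hz'side hw'z'] := hside w' hw'side.
exists (rho w'); split.
- have hz'x : e (rho w') x by rewrite -[X in e _ X](hmid x hxm) hauto.
  rewrite !inE; apply/andP; split; first by apply/eqP/dist1E.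
  rewrite eqn_leq hdx //.
  have := @dist_map _ e (fun v => if v \in Vside e w z0 then rho v else v) (rho w') x' hc (fold_ok hsym hr) => /=.
  rewrite hz'side hinv.
  have -> : (x' \in Vside e w z0) = false.
    move: hx'side; rewrite !inE => h; apply/negbTE; rewrite -leqNgt ltnW //.
  by rewrite hw'n.
- by rewrite -hpz hauto.
- by rewrite hsym.
Qed.
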